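(* Let $f$ be a norm on $\mathbb{R}^n$, $g$ a norm on $\mathbb{R}^m$, let $\lambda_1,\lambda_2,\alpha_{\bm{x}},\alpha_{\bm{v}}>0$, and let $C>0$ be an absolute constant. Define the cone $$\mathcal{C}(\lambda_1,\lambda_2)=\big\{(\bm{a},\bm{b})\in\mathbb{R}^n\times\mathbb{R}^m:\lambda_1f(\bm{a})+\lambda_2g(\bm{b})\le C\lambda_1\alpha_{\bm{x}}\|\bm{a}\|_2+C\lambda_2\alpha_{\bm{v}}\|\bm{b}\|_2\big\}$$ and $\mathcal{C}^*=\mathcal{C}(\lambda_1,\lambda_2)\cap\mathbb{S}^{n+m-1}$. Then $$\omega(\mathcal{C}^* )\lesssim\Big(\alpha_{\bm{x}}+\frac{\lambda_2\alpha_{\bm{v}}}{\lambda_1}\Big)\omega(\mathbb{B}_f^n)+\Big(\alpha_{\bm{v}}+\frac{\lambda_1\alpha_{\bm{x}}}{\lambda_2}\Big)\omega(\mathbb{B}_g^m).$$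
   Context: $\mathbb{B}_f^n=\{\bm{x}\in\mathbb{R}^n:f(\bm{x})\le1\}$, $\mathbb{B}_g^m$ similarly; $\mathbb{S}^{p-1}$ the Euclidean unit sphere. Gaussian width $\omega(\mathcal{K})=\mathbb{E}\sup_{\bm{x}\in\mathcal{K}}\langle\bm{g},\bm{x}\rangle$, $\bm{g}$ standard Gaussian. $A\lesssim B$ means $A\le C'B$ for an absolute constant $C'$. *)

(* Defs.v *)
From HB Require Import structures.
From mathcomp Require Import all_boot all_order all_algebra.
From mathcomp Require Import all_classical all_reals all_analysis.
Set Implicit Arguments. Unset Strict Implicit. Unset Printing Implicit Defensive.
Import Order.TTheory GRing.Theory Num.Theory.
Local Open Scope classical_set_scope.
Local Open Scope ring_scope.

Section Defs.
Variable R : realType.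

Definition dotv (k : nat) (x y : 'rV[R]_k) : R := \sum_(i < k) x ord0 i * y ord0 i.
Definition norm2 (k : nat) (x : 'rV[R]_k) : R := Num.sqrt (dotv x x).

Definition is_norm (k : nat) (f : 'rV[R]_k -> R) : Prop :=
  [/\ forall x, 0 <= f x,
      forall x, f x = 0 -> x = 0,
      forall (a : R) x, f (a *: x) = `|a| * f x &
      forall x y, f (x + y) <= f x + f y].

Definition unit_ball (k : nat) (f : 'rV[R]_k -> R) : set 'rV[R]_k := [set x | f x <= 1].

Definition unit_sphere (k : nat) : set 'rV[R]_k := [set x | norm2 x = 1].

Definition std_gaussian_vec d (T : measurableType d) (P : probability T R)
    (k : nat) (G : T -> 'rV[R]_k) : Prop :=
  [/\ forall i : 'I_k, measurable_fun setT (fun t => G t ord0 i),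
      forall (i : 'I_k) (A : set R), measurable A ->
        P ((fun t => G t ord0 i) @^-1` A) = normal_prob 0 1 A &
      forall B : 'I_k -> set R, (forall i, measurable (B i)) ->
        P (\bigcap_i ((fun t => G t ord0 i) @^-1` B i))
        = (\prod_(i < k) P ((fun t => G t ord0 i) @^-1` B i))%E].

Definition gaussian_width d (T : measurableType d) (P : probability T R)
    (k : nat) (G : T -> 'rV[R]_k) (K : set 'rV[R]_k) : \bar R :=
  (\int[P]_t ereal_sup [set (dotv (G t) x)%:E | x in K])%E.

(* the cone C(l1,l2) in R^n x R^m = R^(n+m), (a,b) = row_mx a b *)
Definition cone_set (n m : nat) (f : 'rV[R]_n -> R) (g : 'rV[R]_m -> R)
    (C l1 l2 ax av : R) : set 'rV[R]_(n + m) :=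
  [set z | l1 * f (lsubmx z) + l2 * g (rsubmx z)
           <= C * l1 * ax * norm2 (lsubmx z) + C * l2 * av * norm2 (rsubmx z)].

End Defs.

(* Main.v *)
Require Import Defs.
From HB Require Import structures.
From mathcomp Require Import all_boot all_order all_algebra.
From mathcomp Require Import all_classical all_reals all_analysis measurable_realfun.
From mathcomp Require Import lra ring.
Import Order.TTheory GRing.Theory Num.Theory.
Local Open Scope classical_set_scope.
Local Open Scope ring_scope.
Definition vecT (R : realType) (k : nat) := 'rV[R]_k.
HB.instance Definition _ (R : realType) (k : nat) := Choice.on (vecT R k).
HB.instance Definition _ (R : realType) (k : nat) := isPointed.Build (vecT R k) 0.
Definition rects (R : realType) (k : nat) : set (set (vecT R k)) := [set A | exists B : 'I_k -> set R,
  (forall i, measurable (B i)) /\ A = \bigcap_i ((fun x : 'rV[R]_k => x ord0 i) @^-1` B i)].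
Definition Om R k := g_sigma_algebraType (rects R k).
Section Law.
Variables (R : realType) (k : nat).

Lemma mfun_Om d (T : measurableType d) (X : T -> 'rV[R]_k) :
  (forall i, measurable_fun setT (fun t => X t ord0 i)) ->
  measurable_fun setT (X : T -> Om R k).
Proof.
move=> mX; apply: (@measurability d _ T (Om R k) setT X (rects R k)) => //.
move=> _ [A [B [mB ->]] <-].
rewrite setTI preimage_bigcap.
apply: fin_bigcap_measurable => //.
move=> i _; rewrite -[X in measurable X]setTI; exact: mX.
Qed.

Lemma law_integral d0 (T0 : measurableType d0) (P0 : probability T0 R) (X0 : T0 -> 'rV[R]_k)
  d1 (T1 : measurableType d1) (P1 : probability T1 R) (X1 : T1 -> 'rV[R]_k) :
  (forall i, measurable_fun setT (fun t => X0 t ord0 i)) ->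
  (forall i, measurable_fun setT (fun t => X1 t ord0 i)) ->
  (forall B : 'I_k -> set R, (forall i, measurable (B i)) ->
     P0 (\bigcap_i ((fun t => X0 t ord0 i) @^-1` B i)) =
     P1 (\bigcap_i ((fun t => X1 t ord0 i) @^-1` B i))) ->
  forall F : Om R k -> \bar R, measurable_fun setT F -> (forall x, 0 <= F x)%E ->
  (\int[P0]_t F (X0 t) = \int[P1]_t F (X1 t))%E.
Proof.
move=> m0 m1 hB F mF F0.
have mX0 := mfun_Om _ _ _ m0; have mX1 := mfun_Om _ _ _ m1.
have e0 := @ge0_integral_pushforward _ _ _ _ _ (X0 : T0 -> Om R k) mX0 P0 _ _ measurableT mF (fun y _ => F0 y).
have e1 := @ge0_integral_pushforward _ _ _ _ _ (X1 : T1 -> Om R k) mX1 P1 _ _ measurableT mF (fun y _ => F0 y).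
rewrite preimage_setT in e0 e1.
rewrite -e0 -e1.
have sI : setI_closed (rects R k).
  move=> _ _ [B1 [mB1 ->]] [B2 [mB2 ->]].
  exists (fun i => B1 i `&` B2 i); split; first by move=> i; exact: measurableI.
  by rewrite -bigcapI.
have Gg : forall i : nat, rects R k setT.
  move=> _; exists (fun _ => setT); split => //.
  by apply/seteqP; split => x //= _ i _.
have cov : \bigcup_(i : nat) (setT : set (Om R k)) = setT by rewrite bigcup_const.
apply: eq_measure_integral => A mA _.
apply: (measure_unique (rects R k : set (set (Om R k))) (fun _ => setT) erefl sI Gg cov) => //.
- move=> _ [B [mB ->]].
  rewrite /= /pushforward !preimage_bigcap. exact: hB.
- move=> _; rewrite /= /pushforward preimage_setT.
  apply: (le_lt_trans (probability_le1 _ measurableT)); exact: ltry.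
Qed.
End Law.
Arguments mfun_Om {R k d T X}.
Section Mono.
Local Open Scope ereal_scope.
Lemma le_integral_gen (R : realType) d (T : measurableType d) (mu : {measure set T -> \bar R})
  (f1 f2 : T -> \bar R) : (forall x, 0 <= f2 x) ->
  (forall x, f1 x <= f2 x) -> \int[mu]_x f1 x <= \int[mu]_x f2 x.
Proof.
move=> f20 f12.
rewrite (integralE mu setT f1).
apply: (@le_trans _ _ (\int[mu]_x f1^\+ x)).
  have h0 : 0 <= \int[mu]_x f1^\- x by apply: integral_ge0 => x _; exact: funeneg_ge0.
  apply: le_trans (leeB (lexx _) h0) _; by rewrite sube0.
rewrite ge0_integralTE //.
rewrite [X in _ <= X]ge0_integralTE; last exact: f20.
apply: ereal_sup_le => _ [h hh <-]; exists h => //= x.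
apply: le_trans (hh x) _.
rewrite funeposE /maxe; case: ifPn => _ //.
Qed.
End Mono.
Section Meas.
Variables (R : realType) (k : nat).

Lemma mcoord (i : 'I_k) : measurable_fun setT ((fun x => x ord0 i) : Om R k -> R).
Proof.
move=> _ B mB; rewrite setTI.
apply: sub_sigma_algebra.
exists (fun j => if j == i then B else setT); split.
  by move=> j; case: ifP.
apply/seteqP; split => x /=.
  by move=> Bx j _; case: ifPn => [/eqP -> //|_].
by move=> /(_ i I); rewrite eqxx.
Qed.

Lemma mdot (v : 'rV[R]_k) : measurable_fun setT ((fun x => dotv x v) : Om R k -> R).
Proof.
rewrite /dotv; apply: measurable_sum => i.
apply: measurable_funM => //; exact: mcoord.
Qed.

Definition qv (q : 'rV[rat]_k) : 'rV[R]_k := map_mx ratr q.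
Definition wq (f : 'rV[R]_k -> R) (n : nat) : 'rV[R]_k :=
  match unpickle n with Some q => if f (qv q) <= 1 then qv q else 0 | None => 0 end.
Definition Hs f (x : 'rV[R]_k) : \bar R := esups (fun n => (dotv x (wq f n))%:E) 0.
Definition Ff f (x : 'rV[R]_k) : \bar R := ereal_sup [set (dotv x y)%:E | y in unit_ball f].

Lemma mHs f : measurable_fun setT (Hs f : Om R k -> \bar R).
Proof.
apply: (measurable_fun_esups (f := fun n (x : Om R k) => (dotv x (wq f n))%:E)) => n.
apply/measurable_EFinP; exact: mdot.
Qed.

Lemma norm0 (f : 'rV[R]_k -> R) : is_norm f -> f 0 = 0.
Proof. by case=> _ _ hZ _; rewrite -(scale0r (0:'rV[R]_k)) hZ normr0 mul0r. Qed.

Lemma norm_sum (f : 'rV[R]_k -> R) : is_norm f -> forall I (s : seq I) (P : pred I) (F : I -> 'rV[R]_k),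
  f (\sum_(i <- s | P i) F i) <= \sum_(i <- s | P i) f (F i).
Proof.
move=> nf I s P F; case: (nf) => _ _ _ hT.
elim/big_rec2: _ => [|i y1 y2 _ h]; first by rewrite norm0.
by apply: le_trans (hT _ _) _; rewrite lerD2l.
Qed.

Lemma norm_coord_bound (f : 'rV[R]_k -> R) : is_norm f -> forall (v : 'rV[R]_k) eta,
  (forall i, `|v ord0 i| <= eta) ->
  f v <= eta * \sum_i f (delta_mx 0 i).
Proof.
move=> nf v eta hv; case: (nf) => f0 _ hZ _.
rewrite {1}(row_sum_delta v).
apply: le_trans (norm_sum _ nf _ _ _ _) _.
rewrite mulr_sumr; apply: ler_sum => i _.
by rewrite hZ; apply: ler_wpM2r => //; exact: hv.
Qed.

Lemma dotvD (x u w : 'rV[R]_k) : dotv x (u + w) = dotv x u + dotv x w.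
Proof. by rewrite /dotv -big_split /=; apply: eq_bigr => i _; rewrite mxE mulrDr. Qed.
Lemma dotvZ (x : 'rV[R]_k) c u : dotv x (c *: u) = c * dotv x u.
Proof. by rewrite /dotv mulr_sumr; apply: eq_bigr => i _; rewrite mxE mulrCA. Qed.
Lemma dotv0 (x : 'rV[R]_k) : dotv x 0 = 0.
Proof. by rewrite /dotv big1 // => i _; rewrite mxE mulr0. Qed.

Lemma dotv_bound (x v : 'rV[R]_k) eta : (forall i, `|v ord0 i| <= eta) ->
  - (eta * \sum_i `|x ord0 i|) <= dotv x v.
Proof.
move=> hv; rewrite /dotv mulr_sumr -sumrN; apply: ler_sum => i _.
have h : `|x ord0 i * v ord0 i| <= eta * `|x ord0 i|.
  by rewrite normrM mulrC; apply: ler_wpM2r => //; exact: hv.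
rewrite lerNl; apply: le_trans h; rewrite -normrN; exact: ler_norm.
Qed.

End Meas.
Arguments qv {R k}. Arguments wq {R k}. Arguments Hs {R k}. Arguments Ff {R k}. Arguments norm0 {R k f}. Arguments norm_coord_bound {R k f}. Arguments dotv_bound {R k}. Arguments mHs {R k}.
Section Approx.
Variables (R : realType) (k : nat).

Lemma approx (f : 'rV[R]_k -> R) : is_norm f -> forall (x y : 'rV[R]_k), f y <= 1 ->
  forall e : R, 0 < e -> exists q, f (qv q) <= 1 /\ dotv x y - e <= dotv x (qv q).
Proof.
move=> nf x y fy e e0; case: (nf) => fge0 _ hZ hT.
set S := \sum_i f (delta_mx 0 i : 'rV[R]_k).
set Sx := \sum_i `|x ord0 i|.
set a := `|dotv x y|.
have S0 : 0 <= S by apply: sumr_ge0 => i _.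
have Sx0 : 0 <= Sx by apply: sumr_ge0 => i _.
have a0 : 0 <= a := normr_ge0 _.
set t := e / (2 * (a + 1)).
have t0 : 0 < t by rewrite divr_gt0 //; lra.
have tE : t * (2 * (a + 1)) = e by rewrite /t divfK //; lra.
have ta : t * a <= e / 2 by nra.
set dl := Num.min 1 t.
have dl0 : 0 < dl by rewrite lt_min ltr01 t0.
have dl1 : dl <= 1 by rewrite /dl ge_min lexx.
have dlt : dl <= t by rewrite /dl ge_min lexx orbT.
have dla : dl * a <= e / 2 by apply: le_trans ta; apply: ler_wpM2r.
set u := dl / (S + 1).
have u0 : 0 < u by rewrite divr_gt0 //; lra.
have uE : u * (S + 1) = dl by rewrite /u divfK //; lra.
have uS : u * S <= dl by nra.
set w := e / (2 * (Sx + 1)).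
have w0 : 0 < w by rewrite divr_gt0 //; lra.
have wE : w * (2 * (Sx + 1)) = e by rewrite /w divfK //; lra.
have wS : w * Sx <= e / 2 by nra.
set eta := Num.min u w.
have eta0 : 0 < eta by rewrite lt_min u0 w0.
have etau : eta <= u by rewrite /eta ge_min lexx.
have etaw : eta <= w by rewrite /eta ge_min lexx orbT.
have etaS : eta * S <= dl by apply: le_trans uS; apply: ler_wpM2r.
have etaSx : eta * Sx <= e / 2 by apply: le_trans wS; apply: ler_wpM2r.
set y' := (1 - dl) *: y.
have : forall i : 'I_k, exists r : rat, `|ratr r - y' ord0 i| <= eta.
  move=> i; have [r hr] : exists r : rat, ratr r \in `](y' ord0 i - eta), (y' ord0 i + eta)[.
    by apply: rat_in_itvoo; lra.
  exists r; move: hr; rewrite in_itv /= => /andP [h1 h2].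
  rewrite ler_norml; apply/andP; split; lra.
case/fin_all_exists => r hr.
exists (\row_i r i).
have qE : qv (\row_i r i) = y' + (qv (\row_i r i) - y') by rewrite addrC subrK.
have hd : forall i, `|(qv (\row_i r i) - y') ord0 i| <= eta.
  by move=> i; move: (hr i); rewrite /y' !mxE.
split.
  rewrite qE; apply: le_trans (hT _ _) _.
  have h1 := norm_coord_bound nf _ _ hd.
  have h2 : f y' <= 1 - dl.
    rewrite /y' hZ ger0_norm; last by lra.
    nra.
  rewrite -/S in h1; lra.
rewrite qE dotvD /y' dotvZ.
have h1 := dotv_bound x _ _ hd.
rewrite -/Sx in h1.
have h3 : dl * dotv x y <= dl * a by apply: ler_wpM2l; [lra | exact: ler_norm].
nra.
Qed.

Lemma Ff_Hs (f : 'rV[R]_k -> R) : is_norm f -> forall x, Ff f x = Hs f x.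
Proof.
move=> nf x; apply/eqP; rewrite eq_le; apply/andP; split.
- apply: ge_ereal_sup => _ [y yB <-].
  apply/lee_subgt0Pr => e e0.
  have [q [fq hq]] := approx _ nf x _ yB _ e0.
  rewrite /Hs /esups /sdrop /=.
  apply: le_trans (ereal_sup_ubound _); last first.
    exists (pickle q) => //.
  rewrite /wq pickleK fq /= -EFinB lee_fin; exact: hq.
- rewrite /Hs /esups /sdrop /=.
  apply: ge_ereal_sup => _ [n _ <-].
  apply: ereal_sup_ubound; exists (wq f n) => //.
  rewrite /wq /unit_ball /=; case: unpickle => [q|]; last by rewrite norm0.
  by case: ifPn => // _; rewrite norm0.
Qed.

Lemma Ff_ge0 (f : 'rV[R]_k -> R) : is_norm f -> forall x, (0 <= Ff f x)%E.
Proof.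
move=> nf x; apply: ereal_sup_ubound; exists 0; last by rewrite dotv0.
by rewrite /unit_ball /= norm0.
Qed.

End Approx.
Arguments Ff_Hs {R k f}. Arguments Ff_ge0 {R k f}.
Section Gauss.
Variable R : realType.

Lemma gauss_rect d (T : measurableType d) (P : probability T R) k (G : T -> 'rV[R]_k) :
  std_gaussian_vec P G -> forall B : 'I_k -> set R, (forall i, measurable (B i)) ->
  P (\bigcap_i ((fun t => G t ord0 i) @^-1` B i)) = (\prod_(i < k) normal_prob 0 1 (B i))%E.
Proof. by case=> _ h2 h3 B mB; rewrite h3 //; apply: eq_bigr => i _; exact: h2. Qed.

Lemma normal_setT d (T : measurableType d) (P : probability T R) k (G : T -> 'rV[R]_k) :
  std_gaussian_vec P G -> 'I_k -> normal_prob 0 1 (@setT R) = 1%E.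
Proof.
case=> _ h2 _ i; rewrite -(h2 i setT measurableT) preimage_setT.
exact: probability_setT.
Qed.

Lemma gauss_left d (T : measurableType d) (P : probability T R) n m (G : T -> 'rV[R]_(n + m)) :
  std_gaussian_vec P G ->
  (forall i, measurable_fun setT (fun t => lsubmx (G t) ord0 i)) /\
  forall B : 'I_n -> set R, (forall i, measurable (B i)) ->
  P (\bigcap_i ((fun t => lsubmx (G t) ord0 i) @^-1` B i)) = (\prod_(i < n) normal_prob 0 1 (B i))%E.
Proof.
move=> hG; case: (hG) => h1 h2 h3; split.
  by move=> i; under eq_fun do rewrite mxE; exact: h1.
move=> B mB.
pose B' := fun j : 'I_(n + m) => match fintype.split j with inl i => B i | inr _ => setT end.
have mB' : forall j, measurable (B' j) by move=> j; rewrite /B'; case: fintype.split.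
have -> : \bigcap_i ((fun t => lsubmx (G t) ord0 i) @^-1` B i) =
    \bigcap_j ((fun t => G t ord0 j) @^-1` B' j).
  apply/seteqP; split => t /= h j _.
  - rewrite /B'; case: splitP => [i ji|i ji] //.
    have -> : j = lshift m i by apply: val_inj.
    by have := h i I; rewrite /preimage /= mxE.
  - have := h (lshift m j) I; rewrite /B'.
    have -> : fintype.split (lshift m j) = inl j by exact: (unsplitK (inl j)).
    by rewrite /preimage /= mxE.
rewrite h3 // big_split_ord /=.
rewrite [X in (_ * X)%E]big1 ?mule1; last first.
  move=> i _; rewrite /B'.
  have -> : fintype.split (rshift n i) = inr i by exact: (unsplitK (inr i)).
  by rewrite preimage_setT probability_setT.
apply: eq_bigr => i _; rewrite /B'.
have -> : fintype.split (lshift m i) = inl i by exact: (unsplitK (inl i)).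
exact: h2.
Qed.

Lemma gauss_right d (T : measurableType d) (P : probability T R) n m (G : T -> 'rV[R]_(n + m)) :
  std_gaussian_vec P G ->
  (forall i, measurable_fun setT (fun t => rsubmx (G t) ord0 i)) /\
  forall B : 'I_m -> set R, (forall i, measurable (B i)) ->
  P (\bigcap_i ((fun t => rsubmx (G t) ord0 i) @^-1` B i)) = (\prod_(i < m) normal_prob 0 1 (B i))%E.
Proof.
move=> hG; case: (hG) => h1 h2 h3; split.
  by move=> i; under eq_fun do rewrite mxE; exact: h1.
move=> B mB.
pose B' := fun j : 'I_(n + m) => match fintype.split j with inl _ => setT | inr i => B i end.
have mB' : forall j, measurable (B' j) by move=> j; rewrite /B'; case: fintype.split.
have -> : \bigcap_i ((fun t => rsubmx (G t) ord0 i) @^-1` B i) =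
    \bigcap_j ((fun t => G t ord0 j) @^-1` B' j).
  apply/seteqP; split => t /= h j _.
  - rewrite /B'; case: splitP => [i ji|i ji] //.
    have -> : j = rshift n i by apply: val_inj.
    by have := h i I; rewrite /preimage /= mxE.
  - have := h (rshift n j) I; rewrite /B'.
    have -> : fintype.split (rshift n j) = inr j by exact: (unsplitK (inr j)).
    by rewrite /preimage /= mxE.
rewrite h3 // big_split_ord /=.
rewrite [X in (X * _)%E]big1 ?mul1e; last first.
  move=> i _; rewrite /B'.
  have -> : fintype.split (lshift m i) = inl i by exact: (unsplitK (inl i)).
  by rewrite preimage_setT probability_setT.
apply: eq_bigr => i _; rewrite /B'.
have -> : fintype.split (rshift n i) = inr i by exact: (unsplitK (inr i)).
exact: h2.
Qed.

Lemma dotv_split n m (x z : 'rV[R]_(n + m)) :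
  dotv x z = dotv (lsubmx x) (lsubmx z) + dotv (rsubmx x) (rsubmx z).
Proof. by rewrite /dotv big_split_ord /=; congr (_ + _); apply: eq_bigr => i _; rewrite !mxE. Qed.

Lemma dotv_ge0 k (x : 'rV[R]_k) : 0 <= dotv x x.
Proof. by apply: sumr_ge0 => i _; rewrite -expr2 sqr_ge0. Qed.

Lemma norm2_ge0 k (x : 'rV[R]_k) : 0 <= norm2 x.
Proof. exact: sqrtr_ge0. Qed.

Lemma norm2_split n m (z : 'rV[R]_(n + m)) : norm2 z = 1 ->
  norm2 (lsubmx z) <= 1 /\ norm2 (rsubmx z) <= 1.
Proof.
move=> hz.
have e1 : dotv z z = 1 by rewrite -(sqr_sqrtr (dotv_ge0 _ z)) -/(norm2 z) hz expr1n.
rewrite dotv_split in e1.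
have := dotv_ge0 _ (lsubmx z); have := dotv_ge0 _ (rsubmx z) => h1 h2.
by rewrite /norm2 -sqrtr1 !ler_sqrt //; split; lra.
Qed.
End Gauss.
Arguments gauss_rect {R d T P k G}. Arguments gauss_left {R d T P n m G}. Arguments gauss_right {R d T P n m G}. Arguments norm2_split {R n m z}.
Theorem propositionA8 (R : realType) (C : R) (hC : 0 < C) :
  exists C' : R, 0 < C' /\
  forall (n m : nat) (f : 'rV[R]_n -> R) (g : 'rV[R]_m -> R)
         (l1 l2 ax av : R),
    is_norm f -> is_norm g ->
    0 < l1 -> 0 < l2 -> 0 < ax -> 0 < av ->
    forall (d0 : measure_display) (T0 : measurableType d0) (P0 : probability T0 R)
           (G0 : T0 -> 'rV[R]_(n + m))
           (d1 : measure_display) (T1 : measurableType d1) (P1 : probability T1 R)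
           (G1 : T1 -> 'rV[R]_n)
           (d2 : measure_display) (T2 : measurableType d2) (P2 : probability T2 R)
           (G2 : T2 -> 'rV[R]_m),
    std_gaussian_vec P0 G0 -> std_gaussian_vec P1 G1 -> std_gaussian_vec P2 G2 ->
    (gaussian_width P0 G0 (cone_set f g C l1 l2 ax av `&` @unit_sphere R (n + m)%N)
     <= C'%:E * ((ax + l2 * av / l1)%:E * gaussian_width P1 G1 (unit_ball f)
                 + (av + l1 * ax / l2)%:E * gaussian_width P2 G2 (unit_ball g)))%E.
Proof.
exists C; split => //.
move=> n m f g l1 l2 ax av nf ng l10 l20 ax0 av0 d0 T0 P0 G0 d1 T1 P1 G1 d2 T2 P2 G2 hG0 hG1 hG2.
have a0 : 0 < ax + l2 * av / l1 by apply: addr_gt0 => //; apply: divr_gt0 => //; exact: mulr_gt0.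
have b0 : 0 < av + l1 * ax / l2 by apply: addr_gt0 => //; apply: divr_gt0 => //; exact: mulr_gt0.
set a := ax + l2 * av / l1.
set b := av + l1 * ax / l2.
have [mL hL] := gauss_left hG0.
have [mR hR] := gauss_right hG0.
have HsL0 : forall x, (0 <= Hs f x)%E by move=> x; rewrite -Ff_Hs //; exact: Ff_ge0.
have HsR0 : forall x, (0 <= Hs g x)%E by move=> x; rewrite -Ff_Hs //; exact: Ff_ge0.
have mHL : measurable_fun setT (fun t => Hs f (lsubmx (G0 t))).
  exact: (measurableT_comp (mHs f) (mfun_Om mL)).
have mHR : measurable_fun setT (fun t => Hs g (rsubmx (G0 t))).
  exact: (measurableT_comp (mHs g) (mfun_Om mR)).
have W1 : gaussian_width P1 G1 (unit_ball f) = (\int[P0]_t Hs f (lsubmx (G0 t)))%E.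
  rewrite /gaussian_width.
  transitivity (\int[P1]_t Hs f (G1 t))%E.
    by apply: eq_integral => t _; rewrite -Ff_Hs.
  symmetry; apply: law_integral => //.
  - by case: hG1.
  - by move=> B mB; rewrite hL // gauss_rect.
  - exact: mHs.
have W2 : gaussian_width P2 G2 (unit_ball g) = (\int[P0]_t Hs g (rsubmx (G0 t)))%E.
  rewrite /gaussian_width.
  transitivity (\int[P2]_t Hs g (G2 t))%E.
    by apply: eq_integral => t _; rewrite -Ff_Hs.
  symmetry; apply: law_integral => //.
  - by case: hG2.
  - by move=> B mB; rewrite hR // gauss_rect.
  - exact: mHs.
rewrite W1 W2.
rewrite -(ge0_integralZl _ _ mHL) //; last by rewrite lee_fin ltW.
rewrite -(ge0_integralZl _ _ mHR) //; last by rewrite lee_fin ltW.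
rewrite -ge0_integralD //; last 4 first.
- by move=> t _; apply: mule_ge0 => //; rewrite lee_fin ltW.
- by apply: measurable_funeM.
- by move=> t _; apply: mule_ge0 => //; rewrite lee_fin ltW.
- by apply: measurable_funeM.
rewrite -ge0_integralZl //; last 3 first.
- apply: emeasurable_funD; exact: measurable_funeM.
- by move=> t _; apply: adde_ge0; apply: mule_ge0 => //; rewrite lee_fin ltW.
- by rewrite lee_fin ltW.
apply: le_integral_gen.
  by move=> t; apply: mule_ge0; [rewrite lee_fin ltW|apply: adde_ge0; apply: mule_ge0 => //; rewrite lee_fin ltW].
move=> t; rewrite /=.
apply: ge_ereal_sup => _ [z [zc zs] <-].
rewrite -!Ff_Hs //.
have Ff0 : forall x, (0 <= Ff f x)%E by move=> x; exact: Ff_ge0.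
have Fg0 : forall x, (0 <= Ff g x)%E by move=> x; exact: Ff_ge0.
rewrite ge0_muleDr; last 2 first.
- by apply: mule_ge0 => //; rewrite lee_fin ltW.
- by apply: mule_ge0 => //; rewrite lee_fin ltW.
rewrite !muleA -!EFinM.
have K10 : 0 < C * a by exact: mulr_gt0.
have K20 : 0 < C * b by exact: mulr_gt0.
have [nl nr] := norm2_split zs.
move: zc; rewrite /cone_set /= => zc.
case: (nf) => f0 _ hZf _; case: (ng) => g0 _ hZg _.
have nu0 := norm2_ge0 _ _ (lsubmx z); have nv0 := norm2_ge0 _ _ (rsubmx z).
have p1 : 0 < C * l1 * ax by rewrite mulr_gt0 // mulr_gt0.
have p2 : 0 < C * l2 * av by rewrite mulr_gt0 // mulr_gt0.
have h1 : C * l1 * ax * norm2 (lsubmx z) <= C * l1 * ax by apply: ler_piMr => //; exact: ltW.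
have h2 : C * l2 * av * norm2 (rsubmx z) <= C * l2 * av by apply: ler_piMr => //; exact: ltW.
have fg := f0 (lsubmx z); have gg := g0 (rsubmx z).
have l1K : l1 * (C * a) = C * l1 * ax + C * l2 * av.
  rewrite /a; field; exact: lt0r_neq0.
have l2K : l2 * (C * b) = C * l1 * ax + C * l2 * av.
  rewrite /b; field; exact: lt0r_neq0.
have l1f : l1 * f (lsubmx z) <= l1 * (C * a).
  rewrite l1K; have : 0 <= l2 * g (rsubmx z) by apply: mulr_ge0 => //; exact: ltW.
  lra.
have l2g : l2 * g (rsubmx z) <= l2 * (C * b).
  rewrite l2K; have : 0 <= l1 * f (lsubmx z) by apply: mulr_ge0 => //; exact: ltW.
  lra.
rewrite ler_pM2l // in l1f; rewrite ler_pM2l // in l2g.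
rewrite dotv_split EFinD; apply: leeD.
- have -> : dotv (lsubmx (G0 t)) (lsubmx z) = (C * a) * dotv (lsubmx (G0 t)) ((C * a)^-1 *: lsubmx z).
    by rewrite dotvZ mulrA divff ?mul1r //; exact: lt0r_neq0.
  rewrite EFinM; apply: lee_wpmul2l; first by rewrite lee_fin ltW.
  apply: ereal_sup_ubound; exists ((C * a)^-1 *: lsubmx z) => //.
  rewrite /unit_ball /= hZf ger0_norm; last by rewrite invr_ge0 ltW.
  by rewrite mulrC ler_pdivrMr // mul1r.
- have -> : dotv (rsubmx (G0 t)) (rsubmx z) = (C * b) * dotv (rsubmx (G0 t)) ((C * b)^-1 *: rsubmx z).
    by rewrite dotvZ mulrA divff ?mul1r //; exact: lt0r_neq0.
  rewrite EFinM; apply: lee_wpmul2l; first by rewrite lee_fin ltW.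
  apply: ereal_sup_ubound; exists ((C * b)^-1 *: rsubmx z) => //.
  rewrite /unit_ball /= hZg ger0_norm; last by rewrite invr_ge0 ltW.
  by rewrite mulrC ler_pdivrMr // mul1r.
Qed.
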